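(* There is at most one limit on $BM(\infty)$: if $L'$ and $L''$ are mappings $BM(\infty)\to\mathbb{R}$, each satisfying (1) if $f(x)=c$ for every $x$ then the value at $f$ is $c$, and (2) whenever $f,g\in BM(\infty)$ and the value at $f$ is strictly less than the value at $g$, there exists $a$ with $f(x)<g(x)$ for all $x>a$, then $L'(f)=L''(f)$ for every $f\in BM(\infty)$.
   Context: All functions are real-valued functions of a real variable. $BM(\infty)$ is the class of functions $f$ for which there exists $x_0$ such that $f$ is defined, bounded and monotone on the interval $(x_0,\infty)$. *)

(* Defs.v *)
From Stdlib Require Import Reals.
Open Scope R_scope.

(* A real-valued function of a real variable, possibly partial:
   f x = None means f is undefined at x. *)
Definition pfun := R -> option R.

Definition defined_on_ray (f : pfun) (x0 : R) : Prop :=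
  forall x, x0 < x -> exists y, f x = Some y.

Definition bounded_on_ray (f : pfun) (x0 : R) : Prop :=
  exists M, forall x y, x0 < x -> f x = Some y -> Rabs y <= M.

Definition nondecreasing_on_ray (f : pfun) (x0 : R) : Prop :=
  forall x1 x2 y1 y2, x0 < x1 -> x1 <= x2 -> f x1 = Some y1 -> f x2 = Some y2 -> y1 <= y2.

Definition nonincreasing_on_ray (f : pfun) (x0 : R) : Prop :=
  forall x1 x2 y1 y2, x0 < x1 -> x1 <= x2 -> f x1 = Some y1 -> f x2 = Some y2 -> y2 <= y1.

Definition BM (f : pfun) : Prop :=
  exists x0, defined_on_ray f x0 /\ bounded_on_ray f x0 /\
    (nondecreasing_on_ray f x0 \/ nonincreasing_on_ray f x0).

Definition const_fun (c : R) : pfun := fun _ => Some c.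

Definition eventually_lt (f g : pfun) : Prop :=
  exists a, forall x, a < x -> exists y z, f x = Some y /\ g x = Some z /\ y < z.

(* A "limit" on BM(oo): a mapping BM(oo) -> R (given as a map on all
   partial functions, only its values on BM(oo) matter) satisfying (1),(2). *)
Definition is_limit_on_BM (L : pfun -> R) : Prop :=
  (forall c, L (const_fun c) = c) /\
  (forall f g, BM f -> BM g -> L f < L g -> eventually_lt f g).

(* Main.v *)
Require Import Defs.
From Stdlib Require Import Reals Lra.
Open Scope R_scope.

Lemma BM_const c : BM (const_fun c).
Proof.
  exists 0. split; [|split].
  - intros x _. exists c. reflexivity.
  - exists (Rabs c). intros x y _ H. unfold const_fun in H. inversion H. lra.
  - left. intros x1 x2 y1 y2 _ _ H1 H2. unfold const_fun in *.
    inversion H1; inversion H2; lra.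
Qed.

Lemma one_side (L1 L2 : pfun -> R) :
  is_limit_on_BM L1 -> is_limit_on_BM L2 ->
  forall f, BM f -> ~ L1 f < L2 f.
Proof.
  intros [C1 M1] [C2 M2] f Hf Hlt.
  set (c := (L1 f + L2 f) / 2).
  assert (E1 : eventually_lt f (const_fun c)).
  { apply M1; auto using BM_const. rewrite C1. unfold c; lra. }
  assert (E2 : eventually_lt (const_fun c) f).
  { apply M2; auto using BM_const. rewrite C2. unfold c; lra. }
  destruct E1 as [a Ha]. destruct E2 as [b Hb].
  destruct (Ha (Rmax a b + 1)) as [y [z [H1 [H2 H3]]]].
  { pose proof (Rmax_l a b); lra. }
  destruct (Hb (Rmax a b + 1)) as [y' [z' [H1' [H2' H3']]]].
  { pose proof (Rmax_r a b); lra. }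
  unfold const_fun in *. rewrite H1 in H2'. inversion H2; inversion H1'; inversion H2'. subst. lra.
Qed.

Theorem mainTheorem2 (L1 L2 : pfun -> R) :
  is_limit_on_BM L1 -> is_limit_on_BM L2 ->
  forall f, BM f -> L1 f = L2 f.
Proof.
  intros H1 H2 f Hf.
  pose proof (one_side L1 L2 H1 H2 f Hf).
  pose proof (one_side L2 L1 H2 H1 f Hf).
  lra.
Qed.
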